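(* Let $\lambda\in X^+$ be a $p$-core. Let $\alpha=\varepsilon_i+\varepsilon_j$ with $1\le i<j\le l(\lambda)$ and integers $a,l\ge1$ with $\langle\lambda+\rho,\alpha^\vee\rangle=a+lp$, $(\lambda+\rho)_j-a>0$ and $\chi(s_{\alpha,l}\cdot\lambda)\ne0$. Then the entries of $s_{\alpha,l}(\lambda+\rho)$ are distinct and strictly positive. Put $\mu_\alpha=\mathrm{sort}(s_{\alpha,l}(\lambda+\rho))-\rho$. Then $\mu_\alpha$ is a partition with $\mu_\alpha\subsetneq\lambda$, and $\mu_\alpha$ is conjugate to $\lambda$ under the dot action of $W_p(D_{l(\lambda)})$. Furthermore, the map $(\alpha,l)\mapsto\mu_\alpha$, defined on the set of all such pairs $(\alpha,l)$, is injective.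
   Context: Setup: $p>2$ is a prime, $m\ge1$, weight lattice $X=\mathbb Z^m$ of $\mathrm{Sp}_{2m}$ with standard basis $\varepsilon_i$, standard inner product, $\alpha^\vee=2\alpha/\langle\alpha,\alpha\rangle$. $X^+=\{\lambda\in\mathbb Z^m:\lambda_1\ge\dots\ge\lambda_m\ge0\}$ (partitions with at most $m$ parts); $l(\lambda)$ is the number of nonzero entries. $\rho=(m,m-1,\dots,1)$. $s_{\alpha,l}(x)=x-(\langle x,\alpha^\vee\rangle-lp)\alpha$, $w\cdot x=w(x+\rho)-\rho$. $\chi(\mu)$ is the Weyl character; $\chi(\mu)=0$ iff some entry of $\mu+\rho$ is $0$ or two entries are equal up to sign. A $p$-core is $\lambda\in X^+$ such that for all $i$ and all integers $l\ge1$ with $(\lambda+\rho)_i-lp>0$, the number $(\lambda+\rho)_i-lp$ occurs as an entry of $\lambda+\rho$. $\mathrm{sort}(\mu)$ is the weakly decreasing rearrangement of $\mu\in\mathbb Z^m$; $\mu\subseteq\nu$ means $\mu_i\le\nu_i$ for all $i$. For $1\le t\le m$, $W_p(D_t)$ is the group of affine transformations of $\mathbb R^m$ generated by the $s_{\alpha,l}$ with $\alpha=\varepsilon_i\pm\varepsilon_j$, $1\le i<j\le t$, $l\in\mathbb Z$. *)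

(* Defs.v *)
(* Weights of Sp_{2m}: X = Z^m, represented as {ffun 'I_m -> int}.
   Indices are 0-based: the paper's epsilon_{k} (1 <= k <= m) is index k-1. *)
From HB Require Import structures.
From mathcomp Require Import all_boot all_order all_algebra.
Set Implicit Arguments. Unset Strict Implicit. Unset Printing Implicit Defensive.
Import Order.TTheory GRing.Theory Num.Theory.
Local Open Scope ring_scope.

Definition weight (m : nat) := {ffun 'I_m -> int}.

Definition addw m (x y : weight m) : weight m := [ffun k => x k + y k].
Definition subw m (x y : weight m) : weight m := [ffun k => x k - y k].

Definition rho m : weight m := [ffun k : 'I_m => ((m - k)%N)%:Z].

Definition dotp m (x y : weight m) : int := \sum_(k < m) x k * y k.

Definition dominant m (x : weight m) : Prop :=
  (forall k, 0 <= x k) /\ (forall k k' : 'I_m, (k <= k')%N -> x k' <= x k).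

Definition len m (x : weight m) : nat := #|[set k | x k != 0]|.

Definition p_core (p : nat) m (lam : weight m) : Prop :=
  dominant lam /\
  forall (k : 'I_m) (l : int), 1 <= l ->
    0 < addw lam (rho m) k - l * p%:Z ->
    exists k' : 'I_m, addw lam (rho m) k' = addw lam (rho m) k - l * p%:Z.

Definition sgn (neg : bool) : int := if neg then -1 else 1.
Definition root m (i j : 'I_m) (neg : bool) : weight m :=
  [ffun k => ((k == i)%:R + sgn neg * (k == j)%:R)].

(* affine reflection s_{alpha,l}(x) = x - (<x, alpha^v> - l p) alpha.
   For the roots eps_i +- eps_j (i <> j) one has <alpha,alpha> = 2, so alpha^v = alpha. *)
Definition s_aff (p : nat) m (i j : 'I_m) (neg : bool) (l : int) (x : weight m)
  : weight m :=
  let a := root i j neg in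
  [ffun k => x k - (dotp x a - l * p%:Z) * a k].

Definition dot_act m (w : weight m -> weight m) (x : weight m) : weight m :=
  subw (w (addw x (rho m))) (rho m).

(* Weyl character vanishing: chi(mu) = 0 iff some entry of mu+rho is 0 or two
   entries (at distinct positions) are equal up to sign. *)
Definition weyl_char_zero m (mu : weight m) : Prop :=
  let x := addw mu (rho m) in
  (exists k, x k = 0) \/
  (exists k k' : 'I_m, k != k' /\ (x k = x k' \/ x k = - x k')).

Definition sortw m (x : weight m) : weight m :=
  [ffun k : 'I_m => nth 0 (sort (fun a b : int => b <= a) (codom x)) k].

Definition subw_le m (mu nu : weight m) : Prop := forall k, mu k <= nu k.

(* Generators of W_p(D_t): s_{alpha,l}, alpha = eps_i +- eps_j, 1 <= i < j <= t, l in Z.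
   A generator is encoded as (i, j, neg, l). *)
Definition gen_data m := ('I_m * 'I_m * bool * int)%type.
Definition is_gen_D m (t : nat) (g : gen_data m) : bool :=
  (g.1.1.1 < g.1.1.2 < t)%N.
Definition gen_act (p : nat) m (g : gen_data m) : weight m -> weight m :=
  s_aff p g.1.1.1 g.1.1.2 g.1.2 g.2.
Definition word_act (p : nat) m (w : seq (gen_data m)) (x : weight m) : weight m :=
  foldr (fun g y => gen_act p g y) x w.

Definition WpD_dot_conj (p : nat) m (t : nat) (lam mu : weight m) : Prop :=
  exists w : seq (gen_data m),
    all (is_gen_D t) w /\ dot_act (word_act p w) lam = mu.

Definition admissible (p : nat) m (lam : weight m) (i j : 'I_m) (a l : int) : Prop :=
  let x := addw lam (rho m) in
  [/\ (i < j)%N, (j < len lam)%N, 1 <= a & 1 <= l] /\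
  [/\ dotp x (root i j false) = a + l * p%:Z,
      0 < x j - a
    & ~ weyl_char_zero (dot_act (s_aff p i j false l) lam)].

Definition mu_alpha (p : nat) m (lam : weight m) (i j : 'I_m) (l : int) : weight m :=
  subw (sortw (s_aff p i j false l (addw lam (rho m)))) (rho m).

(* Main.v *)
Require Import Defs.
From mathcomp Require Import all_boot all_order all_algebra zify.
Import Order.TTheory GRing.Theory Num.Theory.
Local Open Scope ring_scope.


Definition rge : rel int := fun a b : int => b <= a.

Lemma rge_total : total rge. Proof. by move=> a b; rewrite /rge orbC le_total. Qed.
Lemma rge_trans : transitive rge. Proof. by move=> b a c; rewrite /rge => h1 h2; apply: le_trans h2 h1. Qed.
Lemma rge_refl : reflexive rge. Proof. by move=> a; rewrite /rge. Qed.

Lemma sortw_nth m (y : weight m) (k : 'I_m) :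
  sortw y k = nth 0 (sort rge (codom y)) k.
Proof. by rewrite /sortw ffunE. Qed.

Lemma size_sw m (y : weight m) : size (sort rge (codom y)) = m.
Proof. by rewrite size_sort size_codom card_ord. Qed.

Lemma sortw_range m (y : weight m) (k : 'I_m) : exists k', sortw y k = y k'.
Proof.
rewrite sortw_nth.
have : nth 0 (sort rge (codom y)) k \in codom y.
  by rewrite -(mem_sort rge) mem_nth // size_sw.
by case/codomP=> k' ->; exists k'.
Qed.

Lemma sortw_dec m (y : weight m) (hy : injective y) (k k' : 'I_m) :
  (k < k')%N -> sortw y k' < sortw y k.
Proof.
move=> hk; rewrite !sortw_nth.
have hu : uniq (sort rge (codom y)).
  by rewrite sort_uniq codomE map_inj_uniq // enum_uniq.
rewrite lt_def nth_uniq ?size_sw // ?ltn_ord //.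
idtac.
have := sorted_leq_nth rge_trans rge_refl 0 (sort_sorted rge_total (codom y)).
move=> /(_ k k'); rewrite !inE !size_sw !ltn_ord => /(_ isT isT (ltnW hk)).
by rewrite /rge => ->; rewrite andbT neq_ltn hk.
Qed.

Lemma count_sorted (s : seq int) k : sorted rge s -> (k < size s)%N ->
  (k.+1 <= count (fun u : int => (nth 0 s k <= u)%R) s)%N.
Proof.
move=> hs hk.
set v := nth 0 s k.
rewrite -[in X in (_ <= X)%N](cat_take_drop k.+1 s) count_cat.
have : all (fun u => nth 0 s k <= u) (take k.+1 s).
  apply/allP => u /(nthP 0) [q] hq0 <-.
  have hq : (q < k.+1)%N.
    by move: hq0; rewrite size_take; case: ifP => // /negbT; rewrite -leqNgt => h1 h2; apply: leq_trans h2 h1.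
  rewrite nth_take //.
  have := sorted_leq_nth rge_trans rge_refl 0 hs.
  move=> /(_ q k); rewrite !inE hk => H; apply: H => //.
  by apply: leq_trans hq hk.
rewrite all_count => /eqP ->.
have -> : size (take k.+1 s) = k.+1 by rewrite size_take; case: ifP => // /negbT; rewrite -leqNgt => h; apply/eqP; rewrite eqn_leq h hk.
by apply: leq_addr.
Qed.

Lemma count_iota_lt (k m : nat) : (k <= m)%N ->
  (count (fun n => n < k)%N (iota 0 m) <= k)%N.
Proof.
move=> hkm.
rewrite -(subnKC hkm) iotaD count_cat.
rewrite (@eq_in_count _ _ pred0 (iota (0 + k) (m - k))); last first.
  by move=> n; rewrite mem_iota /= => /andP [h _]; rewrite ltnNge h.
by rewrite count_pred0 addn0 (leq_trans (count_size _ _)) // size_iota.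
Qed.

Lemma sortw_le m (y x : weight m) (hle : forall q, y q <= x q)
  (hx : forall q q' : 'I_m, (q <= q')%N -> x q' <= x q) (k : 'I_m) :
  sortw y k <= x k.
Proof.
rewrite sortw_nth; set v := nth 0 _ _.
have h1 := @count_sorted _ k (sort_sorted rge_total (codom y)).
rewrite size_sw ltn_ord in h1; have {h1} h1 := h1 isT.
move: h1; rewrite -/v.
have -> : count (fun u => v <= u) (sort rge (codom y)) = count (fun u => v <= u) (codom y).
  by apply/permP; rewrite perm_sort.
rewrite codomE count_map => h1.
have h2 : (count (fun q => (v <= y q)%R) (enum 'I_m) <= count (fun q => (v <= x q)%R) (enum 'I_m))%N.
  by apply: sub_count => q /= hq; apply: le_trans hq (hle q).
rewrite leNgt; apply/negP => hlt.
have h3 : (count (fun q => (v <= x q)%R) (enum 'I_m) <= count (fun q : 'I_m => (q < k)%N) (enum 'I_m))%N.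
  apply: sub_count => q /= hq; rewrite ltnNge; apply/negP => hkq.
  by have := le_lt_trans (le_trans hq (hx _ _ hkq)) hlt; rewrite ltxx.
have h4 : (count (fun q : 'I_m => (q < k)%N) (enum 'I_m) <= k)%N.
  rewrite -(count_map (@nat_of_ord m) (fun n => n < k)%N) val_enum_ord.
  by apply: count_iota_lt; apply: ltnW (ltn_ord k).
have := leq_trans h1 (leq_trans h2 (leq_trans h3 h4)).
by rewrite ltnn.
Qed.

Lemma gap (f : nat -> int) m (hf : forall a b, (a < b)%N -> (b < m)%N -> f b < f a) :
  forall d a, (a + d < m)%N -> f (a + d)%N + d%:Z <= f a.
Proof.
elim=> [|d IH] a h; first by rewrite addn0 addr0.
have h0 : (a + d < m)%N by move: h; rewrite addnS; apply: ltnW.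
have h1 := IH a h0.
have h2 : f (a + d.+1)%N < f (a + d)%N by apply: hf => //; rewrite addnS.
lia.
Qed.

Lemma sum_pred1 m (z : weight m) (k : 'I_m) : \sum_(q < m) z q * (q == k)%:R = z k.
Proof.
rewrite (bigD1 k) //= eqxx mulr1 big1 ?addr0 // => q /negbTE ->; by rewrite mulr0.
Qed.

Lemma dotp_root m (z : weight m) (i j : 'I_m) neg :
  dotp z (Defs.root i j neg) = z i + sgn neg * z j.
Proof.
rewrite /dotp.
under eq_bigr => q _ do rewrite ffunE mulrDr mulrCA.
by rewrite big_split /= -mulr_sumr !sum_pred1.
Qed.

Lemma swap_val p m (z : weight m) (k t : 'I_m) (q : 'I_m) : k != t ->
  s_aff p k t true 0 z q = if q == k then z t else if q == t then z k else z q.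
Proof.
move=> hkt; rewrite /s_aff ffunE dotp_root ffunE /sgn mul0r subr0.
case: (eqVneq q k) => [->|hqk] /=; first by rewrite (negbTE hkt) /=; lia.
case: (eqVneq q t) => [->|hqt] /=; lia.
Qed.

Lemma transp_word p m (T : nat) (z' : weight m) (hz' : injective z') :
  forall t, (t <= T)%N -> forall z : weight m,
  (forall k : 'I_m, (t <= k)%N -> z k = z' k) ->
  (forall k, exists k', z' k = z k') ->
  exists w, all (is_gen_D T) w /\ word_act p w z = z'.
Proof.
elim=> [|t IH] hT z hag hr.
  by exists [::]; split => //; apply/ffunP => k; apply: hag.
have hT' : (t <= T)%N by apply: ltnW.
case: (ltnP t m) => htm; last first.
  apply: IH => // k hk; apply: hag; have := ltn_ord k; lia.
pose tt := Ordinal htm.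
have [k' hk'] := hr tt.
case: (ltngtP k' t) => hc.
- pose g : gen_data m := (k', tt, true, 0).
  have hne : k' != tt by rewrite neq_ltn hc.
  have H1 : forall q : 'I_m, (t <= q)%N -> gen_act p g z q = z' q.
    move=> q hq; rewrite /gen_act /= swap_val //.
    case: (eqVneq q k') => [hq'|hqk]; first by move: hq; rewrite hq'; lia.
    case: (eqVneq q tt) => [->|hqt]; first by rewrite -hk'.
    by apply: hag; move: hqt; rewrite -val_eqE /=; lia.
  have H2 : forall q, exists q', z' q = gen_act p g z q'.
    move=> q; have [q' ->] := hr q.
    case: (eqVneq q' k') => [->|h1]; first by exists tt; rewrite /gen_act /= swap_val // eqxx eq_sym (negbTE hne).
    case: (eqVneq q' tt) => [->|h2]; first by exists k'; rewrite /gen_act /= swap_val // eqxx.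
    by exists q'; rewrite /gen_act /= swap_val // (negbTE h1) (negbTE h2).
  have [w [hw1 hw2]] := IH hT' (gen_act p g z) H1 H2.
  exists (w ++ [:: g]); split.
    by rewrite all_cat hw1 /= /is_gen_D /= hc andbT; apply: leq_trans hT.
  by rewrite /word_act foldr_cat.
- have := hag k' hc; rewrite -hk' => /hz' hh.
  by move: hc; rewrite -hh /=; lia.
- apply: IH => // q hq.
  case: (ltngtP q t) => hq'; first by move: hq; lia.
    by apply: hag.
  have -> : q = tt by apply/val_inj.
  have e : k' = tt by apply/val_inj.
  by rewrite hk' e.
Qed.

Lemma len_zero m (lam : weight m) (hlam : dominant lam) (k : 'I_m) :
  (len lam <= k)%N -> lam k = 0.
Proof.
move=> hk; apply/eqP; apply/negPn/negP => hnz.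
case: hlam => hpos hdec.
have hkm : (k.+1 <= m)%N := ltn_ord k.
have hsub : [set widen_ord hkm q | q : 'I_k.+1] \subset [set q | lam q != 0].
  apply/subsetP => u /imsetP [q _ ->]; rewrite inE.
  have h1 := hdec (widen_ord hkm q) k (ltn_ord q).
  have h2 := hpos k.
  move: hnz; lia.
have := subset_leq_card hsub.
rewrite card_imset; last by move=> q1 q2 /(congr1 val) /= /val_inj.
rewrite card_ord -/(len lam) => h; move: (leq_trans h hk); by rewrite ltnn.
Qed.

Lemma x_val m (lam : weight m) (k : 'I_m) : addw lam (rho m) k = lam k + ((m - k)%N)%:Z.
Proof. by rewrite /addw /rho !ffunE. Qed.

Lemma x_dec m (lam : weight m) (hlam : dominant lam) (k k' : 'I_m) :
  (k < k')%N -> addw lam (rho m) k' < addw lam (rho m) k.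
Proof.
move=> h; rewrite !x_val; case: hlam => _ hd; have := hd k k' (ltnW h).
have := ltn_ord k'; lia.
Qed.

Lemma x_wdec m (lam : weight m) (hlam : dominant lam) (k k' : 'I_m) :
  (k <= k')%N -> addw lam (rho m) k' <= addw lam (rho m) k.
Proof.
rewrite leq_eqVlt => /orP [/eqP e|h]; last by apply/ltW/x_dec.
by have -> : k' = k by apply/val_inj.
Qed.

Lemma x_inj m (lam : weight m) (hlam : dominant lam) : injective (addw lam (rho m)).
Proof.
move=> k k' e; apply/val_inj; case: (ltngtP k k') => // h.
- by have := @x_dec _ _ hlam _ _ h; rewrite e ltxx.
- by have := @x_dec _ _ hlam _ _ h; rewrite e ltxx.
Qed.

Lemma x_pos m (lam : weight m) (hlam : dominant lam) (k : 'I_m) : 1 <= addw lam (rho m) k.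
Proof. rewrite x_val; case: hlam => hp _; have := hp k; have := ltn_ord k; lia. Qed.

Lemma addw_subw m (u r : weight m) k : addw (subw u r) r k = u k.
Proof. by rewrite /addw /subw !ffunE subrK. Qed.

Lemma adm_y p m (lam : weight m) i j a l : admissible p lam i j a l ->
  let x := addw lam (rho m) in let y := s_aff p i j false l x in
  [/\ y i = x i - a, y j = x j - a, (forall k, k != i -> k != j -> y k = x k)
    & injective y].
Proof.
case=> [[hij hjl ha hl] [hd hxj hw]] x y.
have hne : i != j by rewrite neq_ltn hij.
have hy : forall k, y k = x k - a * ((k == i)%:R + (k == j)%:R).
  move=> k; rewrite /y /s_aff ffunE hd ffunE /sgn.
  by rewrite /Defs.root !ffunE addrK /sgn mul1r.
split.
- by rewrite hy eqxx (negbTE hne); lia.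
- by rewrite hy eqxx eq_sym (negbTE hne); lia.
- by move=> k h1 h2; rewrite hy (negbTE h1) (negbTE h2); lia.
move=> k k' e; apply/eqP; apply/negPn/negP => hkk.
apply: hw; right; exists k, k'; split => //; left.
rewrite /dot_act -/x -/y.
by rewrite !addw_subw.
Qed.

Lemma sortw_gap m (y : weight m) (hy : injective y) (k k' : 'I_m) :
  (k <= k')%N -> sortw y k' + ((k' - k)%N)%:Z <= sortw y k.
Proof.
move=> hkk.
pose f n := nth 0 (sort rge (codom y)) n.
have hf : forall a b, (a < b)%N -> (b < m)%N -> f b < f a.
  move=> a b hab hbm; have ham : (a < m)%N by apply: ltn_trans hab hbm.
  have := @sortw_dec _ _ hy (Ordinal ham) (Ordinal hbm) hab.
  by rewrite !sortw_nth.
have := @gap _ _ hf (k' - k) k.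
rewrite subnKC // ltn_ord => /(_ isT).
by rewrite !sortw_nth.
Qed.

Lemma sortw_lb m (y : weight m) (hy : injective y) (hpos : forall k, 0 < y k) (k : 'I_m) :
  ((m - k)%N)%:Z <= sortw y k.
Proof.
have hm : (m.-1 < m)%N by have := ltn_ord k; lia.
pose km := Ordinal hm.
have hk : (k <= km)%N by rewrite /= -ltnS prednK //; have := ltn_ord k; lia.
have h1 := @sortw_gap _ _ hy _ _ hk.
have [q hq] := @sortw_range _ y km.
have h2 := hpos q.
move: h1; rewrite hq /=; have := ltn_ord k; lia.
Qed.

Lemma sortw_eq_range m (y y' : weight m) : sortw y = sortw y' ->
  forall k, exists k', y k = y' k'.
Proof.
move=> e k.
have el : sort rge (codom y) = sort rge (codom y').
  apply: (eq_from_nth (x0 := 0)); first by rewrite !size_sw.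
  move=> n; rewrite size_sw => hn.
  by have := congr1 (fun f : weight m => f (Ordinal hn)) e; rewrite !sortw_nth.
have : y k \in codom y' by rewrite -(mem_sort rge) -el mem_sort codom_f.
by case/codomP => k' ->; exists k'.
Qed.

Lemma member m (x y : 'I_m -> int) (i j : 'I_m) (a : int)
  (hyi : y i = x i - a) (hyj : y j = x j - a)
  (hyo : forall k, k != i -> k != j -> y k = x k) (v : int) :
  (exists k, y k = v) -> [\/ v = x i - a, v = x j - a | exists2 k, (k != i) && (k != j) & v = x k].
Proof.
case=> k <-.
case: (eqVneq k i) => [->|h1]; first by constructor 1.
case: (eqVneq k j) => [->|h2]; first by constructor 2.
by constructor 3; exists k; rewrite ?h1 ?h2 // hyo.
Qed.

Arguments member {m x y i j a} _ _ _ {v} _.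

Lemma inj_core m (x : 'I_m -> int) (hx : forall k k' : 'I_m, (k < k')%N -> x k' < x k)
  (hxi : injective x)
  (y y' : 'I_m -> int) (i j i' j' : 'I_m) (a a' : int)
  (hij : (i < j)%N) (hij' : (i' < j')%N) (ha : 1 <= a) (ha' : 1 <= a')
  (hyi : y i = x i - a) (hyj : y j = x j - a)
  (hyo : forall k, k != i -> k != j -> y k = x k) (hy : injective y)
  (hyi' : y' i' = x i' - a') (hyj' : y' j' = x j' - a')
  (hyo' : forall k, k != i' -> k != j' -> y' k = x k) (hy' : injective y')
  (h1 : forall k, exists k', y k = y' k') (h2 : forall k, exists k', y' k = y k') :
  [/\ i = i', j = j' & a = a'].
Proof.
have hxij := hx _ _ hij.
have hxij' := hx _ _ hij'.
have notin : forall k, y k != x i.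
  move=> k; case: (eqVneq k i) => [->|h]; first by rewrite hyi; lia.
  case: (eqVneq k j) => [->|h']; first by rewrite hyj; lia.
  by rewrite hyo //; apply/negP => /eqP /hxi e; move: h; rewrite e eqxx.
have notin' : forall k, y' k != x i'.
  move=> k; case: (eqVneq k i') => [->|h]; first by rewrite hyi'; lia.
  case: (eqVneq k j') => [->|h']; first by rewrite hyj'; lia.
  by rewrite hyo' //; apply/negP => /eqP /hxi e; move: h; rewrite e eqxx.
have ii : i = i'.
  have A : (i == i') || (i == j').
    apply/negPn/negP; rewrite negb_or => /andP [u1 u2].
    have [k' e] := h2 i; move: (notin k'); rewrite -e hyo' // eqxx //.
  have B : (i' == i) || (i' == j).
    apply/negPn/negP; rewrite negb_or => /andP [u1 u2].
    have [k' e] := h1 i'; move: (notin' k'); rewrite -e hyo // eqxx //.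
  case/orP: A => [/eqP //|/eqP e1]; case/orP: B => [/eqP //|/eqP e2].
  by move: hij hij'; rewrite -e1 -e2; lia.
subst i'.
have hji : j != i by rewrite neq_ltn hij orbT.
have hji' : j' != i by rewrite neq_ltn hij' orbT.
have jj : j = j'.
  apply/eqP; apply/negPn/negP => hjj.
  have hjj' : j' != j by rewrite eq_sym.
  have C : x j = x i - a.
    have [k e] := h2 j; rewrite hyo' // in e.
    have := member hyi hyj hyo (ex_intro _ k (esym e)).
    case => // [e2|[k' /andP [u1 u2] e2]]; first by move: e2; lia.
    by move/hxi: e2 => e2; move: u2; rewrite e2 eqxx.
  have C' : x j' = x i - a'.
    have [k e] := h1 j'; rewrite hyo // in e.
    have := member hyi' hyj' hyo' (ex_intro _ k (esym e)).
    case => // [e2|[k' /andP [u1 u2] e2]]; first by move: e2; lia.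
    by move/hxi: e2 => e2; move: u2; rewrite e2 eqxx.
  have D : x j - a = x i - a' \/ x j - a = x j' - a'.
    have [k e] := h1 j.
    have := member hyi' hyj' hyo' (ex_intro _ k (esym e)).
    case => [e2|e2|[k' /andP [u1 u2] e2]]; [by left; rewrite -hyj | by right; rewrite -hyj|].
    case: (eqVneq k' j) => [ek|nk].
      by move: e2; rewrite hyj ek; lia.
    have : y j = y k' by rewrite e2 hyo.
    by move/hy => ek; move: nk; rewrite ek eqxx.
  have E : x j' - a' = x i - a \/ x j' - a' = x j - a.
    have [k e] := h2 j'.
    have := member hyi hyj hyo (ex_intro _ k (esym e)).
    case => [e2|e2|[k' /andP [u1 u2] e2]]; [by left; rewrite -hyj' | by right; rewrite -hyj'|].
    case: (eqVneq k' j') => [ek|nk].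
      by move: e2; rewrite hyj' ek; lia.
    have : y' j' = y' k' by rewrite e2 hyo'.
    by move/hy' => ek; move: nk; rewrite ek eqxx.
  have hxne : x j <> x j' by move/hxi => e; move: hjj; rewrite e eqxx.
  by case: D; case: E; lia.
subst j'.
split => //.
have D : x j - a = x i - a' \/ x j - a = x j - a'.
  have [k e] := h1 j.
  have := member hyi' hyj' hyo' (ex_intro _ k (esym e)).
  case => [e2|e2|[k' /andP [u1 u2] e2]]; [by left; rewrite -hyj | by right; rewrite -hyj|].
  have : y j = y k' by rewrite e2 hyo.
  by move/hy => ek; move: u2; rewrite ek eqxx.
have E : x j - a' = x i - a \/ x j - a' = x j - a.
  have [k e] := h2 j.
  have := member hyi hyj hyo (ex_intro _ k (esym e)).
  case => [e2|e2|[k' /andP [u1 u2] e2]]; [by left; rewrite -hyj' | by right; rewrite -hyj'|].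
  have : y' j = y' k' by rewrite e2 hyo'.
  by move/hy' => ek; move: u2; rewrite ek eqxx.
by case: D; case: E; lia.
Qed.

Arguments inj_core {m x} hx hxi {y y' i j i' j' a a'}.
Arguments sortw_eq_range {m y y'}.

Theorem lemma2p3 (p m : nat) (hp : prime p) (hp2 : (2 < p)%N) (hm : (1 <= m)%N)
  (lam : weight m) (hlam : dominant lam) (hcore : p_core p lam) :
  (forall (i j : 'I_m) (a l : int), admissible p lam i j a l ->
     let y := s_aff p i j false l (addw lam (rho m)) in
     [/\ injective y & (forall k, 0 < y k)] /\
     [/\ dominant (mu_alpha p lam i j l),
         subw_le (mu_alpha p lam i j l) lam,
         mu_alpha p lam i j l <> lam
       & WpD_dot_conj p (len lam) lam (mu_alpha p lam i j l)]) /\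
  (forall (i j i' j' : 'I_m) (a l a' l' : int),
     admissible p lam i j a l -> admissible p lam i' j' a' l' ->
     mu_alpha p lam i j l = mu_alpha p lam i' j' l' ->
     [/\ i = i', j = j' & l = l']).
Proof.
have hxd := @x_dec _ _ hlam.
have hxw := @x_wdec _ _ hlam.
have hxi := @x_inj _ _ hlam.
have hxp := @x_pos _ _ hlam.
split.
  move=> i j a l hadm y.
  have [hyi hyj hyo hy] := @adm_y _ _ _ _ _ _ _ hadm.
  rewrite -/y in hyi hyj hyo hy.
  case: (hadm) => [[hij hjl ha hl] [hd hxj hw]].
  have hxij := hxd _ _ hij.
  have hpos : forall k, 0 < y k.
    move=> k; case: (eqVneq k i) => [->|h1]; first by rewrite hyi; move: hxj; lia.
    case: (eqVneq k j) => [->|h2]; first by rewrite hyj; move: hxj; lia.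
    by rewrite hyo //; have := hxp k; lia.
  have hle : forall q, y q <= addw lam (rho m) q.
    move=> q; case: (eqVneq q i) => [->|h1]; first by rewrite hyi; lia.
    case: (eqVneq q j) => [->|h2]; first by rewrite hyj; lia.
    by rewrite hyo.
  have hzx := @sortw_le _ _ _ hle hxw.
  have hzl := @sortw_lb _ _ hy hpos.
  have hzg := @sortw_gap _ _ hy.
  have hmu : forall k, mu_alpha p lam i j l k = sortw y k - ((m - k)%N)%:Z.
    by move=> k; rewrite /mu_alpha /subw /rho !ffunE.
  split; first by split.
  split.
  - split => [k|k k' hkk]; rewrite !hmu.
      by have := hzl k; lia.
    have := hzg _ _ hkk; have := ltn_ord k'; lia.
  - by move=> k; rewrite hmu; have := hzx k; rewrite x_val; lia.
  - move=> e.
    have := hzx i; have [k' hk'] := @sortw_range _ y i.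
    have : sortw y i = addw lam (rho m) i by have := congr1 (fun f : weight m => f i) e; rewrite hmu x_val; lia.
    rewrite hk' => e2 _.
    case: (eqVneq k' i) => [ek|n1]; first by move: e2; rewrite ek hyi; lia.
    case: (eqVneq k' j) => [ek|n2]; first by move: e2; rewrite ek hyj; lia.
    by move: e2; rewrite hyo // => /hxi ek; move: n1; rewrite ek eqxx.
  - have hT : forall k : 'I_m, (len lam <= k)%N -> y k = sortw y k.
      move=> k hk.
      have hjk : (j < k)%N := leq_trans hjl hk.
      have n1 : k != i by rewrite neq_ltn; apply/orP; right; apply: ltn_trans hij hjk.
      have n2 : k != j by rewrite neq_ltn hjk orbT.
      rewrite hyo // x_val (@len_zero _ _ hlam _ hk) add0r.
      have := hzl k; have := hzx k; rewrite x_val (@len_zero _ _ hlam _ hk) add0r; lia.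
    have hzinj : injective (sortw y).
      move=> k k' e; apply/val_inj; case: (ltngtP k k') => // h.
      + by have := @sortw_dec _ _ hy _ _ h; rewrite e ltxx.
      + by have := @sortw_dec _ _ hy _ _ h; rewrite e ltxx.
    have hr : forall k, exists k', sortw y k = y k' by move=> k; apply: sortw_range.
    have [w [hw1 hw2]] := @transp_word p m (len lam) (sortw y) hzinj (len lam) (leqnn _) y hT hr.
    exists (w ++ [:: (i, j, false, l)]); split.
      by rewrite all_cat hw1 /= /is_gen_D /= hij hjl.
    have e : word_act p (w ++ [:: (i, j, false, l)]) (addw lam (rho m)) = sortw y.
      by rewrite /word_act foldr_cat; exact: hw2.
    by rewrite /dot_act e.
move=> i j i' j' a l a' l' hadm hadm' e.
have [hyi hyj hyo hy] := @adm_y _ _ _ _ _ _ _ hadm.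
have [hyi' hyj' hyo' hy'] := @adm_y _ _ _ _ _ _ _ hadm'.
case: (hadm) => [[hij hjl ha hl] [hd hxj hw]].
case: (hadm') => [[hij' hjl' ha' hl'] [hd' hxj' hw']].
have hsw : sortw (s_aff p i j false l (addw lam (rho m))) = sortw (s_aff p i' j' false l' (addw lam (rho m))).
  apply/ffunP => k; have := congr1 (fun f : weight m => f k) e.
  rewrite /mu_alpha /subw !ffunE; lia.
have [ii jj aa] := inj_core hxd hxi hij hij' ha ha' hyi hyj hyo hy hyi' hyj' hyo' hy'
  (sortw_eq_range hsw) (sortw_eq_range (esym hsw)).
subst i' j' a'; split => //.
have hp0 : (p%:Z : int) != 0 by have := prime_gt0 hp; lia.
apply: (mulIf hp0); move: hd'; rewrite hd => h; lia.
Qed.
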